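(* Consider the problem of minimizing $g(\mathbf{x})+f(\mathbf{x})+h(\mathbf{y})$ subject to $\mathbf{A}\mathbf{x}+\mathbf{B}\mathbf{y}=\mathbf{0}$ (i.e. the coupling function $g$ depends on $\mathbf{x}$ only), under the standing assumptions (i)–(iv) below, and let $\{(\mathbf{x}^k,\mathbf{y}^k,\boldsymbol{\gamma}^k)\}$ be generated by the two-block linearized ADMM below with parameters satisfying $$L_x\ge L_g+\beta L_{\mathbf{A}}+6L_w^2+1,\quad L_y\ge L_w+L_w^2+3,\quad C_m=\tfrac{L_y+L_w^2}{2},\quad \beta\ge\max\left\{\frac{L_w+L_y+2}{\lambda_{\mathbf{B}^{\rm T}\mathbf{B}}},\frac{3(L_w^2+L_y^2)}{\lambda_{\mathbf{B}^{\rm T}\mathbf{B}}C_m},\frac{3L_y^2}{\lambda_{\mathbf{B}^{\rm T}\mathbf{B}}}\right\},$$ where $L_{\mathbf{A}}$ is the largest eigenvalue of $\mathbf{A}^{\rm T}\mathbf{A}$, $\lambda_{\mathbf{B}^{\rm T}\mathbf{B}}$ the smallest eigenvalue of $\mathbf{B}^{\rm T}\mathbf{B}$, and $L_w=L_g+L_h$. Then the dual sequence $\{\boldsymbol{\gamma}^k\}$ is bounded.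
   Context: Variables $\mathbf{x}\in\mathbb{R}^p$, $\mathbf{y}\in\mathbb{R}^q$; given $\mathbf{A}\in\mathbb{R}^{n\times p}$, $\mathbf{B}\in\mathbb{R}^{n\times q}$; $f$ possibly nonconvex and nonsmooth. A function $s$ is $L$-Lipschitz differentiable if $\nabla s$ is $L$-Lipschitz. Standing assumptions: (i) $h$ is $L_h$-Lipschitz differentiable; (ii) $g$ is $L_g$-Lipschitz differentiable; (iii) $g(\mathbf{x})+f(\mathbf{x})+h(\mathbf{y})$ is lower bounded on the feasible set $\{(\mathbf{x},\mathbf{y}):\mathbf{A}\mathbf{x}+\mathbf{B}\mathbf{y}=\mathbf{0}\}$ and coercive with respect to $\mathbf{y}$ over it (for any feasible sequence with $\|\mathbf{y}^k\|\to\infty$ the objective tends to $+\infty$); (iv) $\mathbf{B}$ has full column rank and $\mathrm{Im}(\mathbf{A})\subset\mathrm{Im}(\mathbf{B})$. Algorithm (parameters $L_x,L_y,\beta>0$, arbitrary initialization): $\mathbf{x}^{k+1}\in\arg\min_{\mathbf{x}}\bar f^k(\mathbf{x})$, $\mathbf{y}^{k+1}=\arg\min_{\mathbf{y}}\bar h^k(\mathbf{y})$, $\boldsymbol{\gamma}^{k+1}=\boldsymbol{\gamma}^k+\beta(\mathbf{A}\mathbf{x}^{k+1}+\mathbf{B}\mathbf{y}^{k+1})$, with $\bar f^k(\mathbf{x})=f(\mathbf{x})+\langle\boldsymbol{\gamma}^k,\mathbf{A}\mathbf{x}\rangle+\frac{L_x}{2}\|\mathbf{x}-\mathbf{x}^k\|^2+\langle\mathbf{x}-\mathbf{x}^k,\nabla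 g(\mathbf{x}^k)+\beta\mathbf{A}^{\rm T}(\mathbf{A}\mathbf{x}^k+\mathbf{B}\mathbf{y}^k)\rangle$, $\bar h^k(\mathbf{y})=\langle\boldsymbol{\gamma}^k,\mathbf{B}\mathbf{y}\rangle+\frac{L_y}{2}\|\mathbf{y}-\mathbf{y}^k\|^2+\frac{\beta}{2}\|\mathbf{A}\mathbf{x}^{k+1}+\mathbf{B}\mathbf{y}\|^2+\langle\mathbf{y}-\mathbf{y}^k,\nabla h(\mathbf{y}^k)\rangle$ (minimizers of $\bar f^k$ assumed to exist). *)

(* Defs.v *)
From HB Require Import structures.
From mathcomp Require Import all_boot all_order all_algebra.
From mathcomp Require Import reals.
Set Implicit Arguments. Unset Strict Implicit. Unset Printing Implicit Defensive.
Import Order.TTheory GRing.Theory Num.Theory.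
Local Open Scope ring_scope.

Section Defs.
Variable R : realType.

Definition dotv (m : nat) (u v : 'cV[R]_m) : R := \sum_(i < m) u i 0 * v i 0.
Definition normv (m : nat) (u : 'cV[R]_m) : R := Num.sqrt (dotv u u).

Definition has_gradient (m : nat) (f : 'cV[R]_m -> R) (gf : 'cV[R]_m -> 'cV[R]_m) :=
  forall x (e : R), 0 < e -> exists d : R, 0 < d /\
    forall v, normv v < d -> `|f (x + v) - f x - dotv (gf x) v| <= e * normv v.

Definition lipschitz_differentiable (m : nat) (f : 'cV[R]_m -> R)
  (gf : 'cV[R]_m -> 'cV[R]_m) (L : R) :=
  has_gradient f gf /\ forall x y, normv (gf x - gf y) <= L * normv (x - y).

Definition largest_eigenvalue (m : nat) (M : 'M[R]_m) (L : R) :=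
  eigenvalue M L /\ forall a, eigenvalue M a -> a <= L.
Definition smallest_eigenvalue (m : nat) (M : 'M[R]_m) (lam : R) :=
  eigenvalue M lam /\ forall a, eigenvalue M a -> lam <= a.

End Defs.

(* Main.v *)
Require Import Defs.
From HB Require Import structures.
From mathcomp Require Import all_boot all_order all_algebra.
From mathcomp Require Import reals.
From mathcomp Require Import all_classical all_reals all_analysis.
From mathcomp Require Import ring lra.
Import Order.TTheory GRing.Theory Num.Theory.
Import numFieldNormedType.Exports.
Set Implicit Arguments. Unset Strict Implicit. Unset Printing Implicit Defensive.
Local Open Scope ring_scope.


Section Basics.
Variable R : realType.
Implicit Types (m k : nat).

Lemma dotvE m (u v : 'cV[R]_m) : dotv u v = (u^T *m v) 0 0.
Proof. by rewrite /dotv !mxE; apply: eq_bigr => i _; rewrite !mxE. Qed.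

Lemma dotvC m (u v : 'cV[R]_m) : dotv u v = dotv v u.
Proof. by rewrite /dotv; apply: eq_bigr => i _; rewrite mulrC. Qed.

Lemma dotvDl m (u v w : 'cV[R]_m) : dotv (u + v) w = dotv u w + dotv v w.
Proof. by rewrite /dotv -big_split; apply: eq_bigr => i _; rewrite !mxE mulrDl. Qed.

Lemma dotvDr m (u v w : 'cV[R]_m) : dotv w (u + v) = dotv w u + dotv w v.
Proof. by rewrite dotvC dotvDl !(dotvC w). Qed.

Lemma dotvZl m a (u w : 'cV[R]_m) : dotv (a *: u) w = a * dotv u w.
Proof. by rewrite /dotv mulr_sumr; apply: eq_bigr => i _; rewrite !mxE mulrA. Qed.

Lemma dotvZr m a (u w : 'cV[R]_m) : dotv w (a *: u) = a * dotv w u.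
Proof. by rewrite dotvC dotvZl dotvC. Qed.

Lemma dotvNl m (u w : 'cV[R]_m) : dotv (- u) w = - dotv u w.
Proof. by rewrite -scaleN1r dotvZl mulN1r. Qed.

Lemma dotvNr m (u w : 'cV[R]_m) : dotv w (- u) = - dotv w u.
Proof. by rewrite -scaleN1r dotvZr mulN1r. Qed.

Lemma dotvBl m (u v w : 'cV[R]_m) : dotv (u - v) w = dotv u w - dotv v w.
Proof. by rewrite dotvDl dotvNl. Qed.

Lemma dotvBr m (u v w : 'cV[R]_m) : dotv w (u - v) = dotv w u - dotv w v.
Proof. by rewrite dotvDr dotvNr. Qed.

Lemma dotv0l m (w : 'cV[R]_m) : dotv 0 w = 0.
Proof. by rewrite -(scale0r (0 : 'cV[R]_m)) dotvZl mul0r. Qed.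

Lemma dotv0r m (w : 'cV[R]_m) : dotv w 0 = 0.
Proof. by rewrite dotvC dotv0l. Qed.

Lemma dotv_ge0 m (u : 'cV[R]_m) : 0 <= dotv u u.
Proof. by rewrite /dotv; apply: sumr_ge0 => i _; rewrite -expr2 sqr_ge0. Qed.

Lemma dotv_eq0 m (u : 'cV[R]_m) : dotv u u = 0 -> u = 0.
Proof.
move=> H; apply/matrixP => i j; rewrite (ord1 j) mxE.
have /eqP := H; rewrite /dotv psumr_eq0 => [/allP Hall|i' _]; last by rewrite -expr2 sqr_ge0.
have := Hall i (mem_index_enum i); rewrite mulf_eq0 orbb => /eqP //.
Qed.

Lemma dotv_mulmx m n (M : 'M[R]_(m, n)) (u : 'cV[R]_m) (v : 'cV[R]_n) :
  dotv u (M *m v) = dotv (M^T *m u) v.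
Proof. by rewrite !dotvE trmx_mul trmxK mulmxA. Qed.

Lemma dotv_amgm m s (a b : 'cV[R]_m) : 2 * s * dotv a b <= s ^+ 2 * dotv a a + dotv b b.
Proof.
have := dotv_ge0 (s *: a - b).
rewrite !dotvBl !dotvBr !dotvZl !dotvZr (dotvC b a).
move=> H; nra.
Qed.

Lemma dotv_sq_add m (a b : 'cV[R]_m) : dotv (a + b) (a + b) <= 2 * dotv a a + 2 * dotv b b.
Proof.
have := dotv_amgm 1 a b.
rewrite !dotvDl !dotvDr (dotvC b a) => H; nra.
Qed.

Lemma dotv_sq_add3 m (a b c : 'cV[R]_m) :
  dotv (a + b + c) (a + b + c) <= 3 * dotv a a + 3 * dotv b b + 3 * dotv c c.
Proof.
have := dotv_amgm 1 a b; have := dotv_amgm 1 a c; have := dotv_amgm 1 b c.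
rewrite !dotvDl !dotvDr (dotvC b a) (dotvC c a) (dotvC c b) => H1 H2 H3; nra.
Qed.

Lemma normv_ge0 m (u : 'cV[R]_m) : 0 <= normv u.
Proof. exact: sqrtr_ge0. Qed.

Lemma normv_sq m (u : 'cV[R]_m) : normv u ^+ 2 = dotv u u.
Proof. by rewrite /normv sqr_sqrtr // dotv_ge0. Qed.

Lemma normvZ m a (u : 'cV[R]_m) : normv (a *: u) = `|a| * normv u.
Proof.
by rewrite /normv dotvZl dotvZr mulrA -expr2 sqrtrM ?sqr_ge0 // sqrtr_sqr.
Qed.

Lemma dotv_cs m (a b : 'cV[R]_m) : dotv a b <= normv a * normv b.
Proof.
have [Ha|Ha] := eqVneq (normv a) 0.
  have : dotv a a = 0 by rewrite -normv_sq Ha expr2 mulr0.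
  by move/dotv_eq0 => Ea; rewrite Ha mul0r Ea dotv0l.
have na : 0 < normv a by rewrite lt_neqAle eq_sym Ha normv_ge0.
have hb := normv_ge0 b.
have [Hb|Hb] := eqVneq (normv b) 0.
  have : dotv b b = 0 by rewrite -normv_sq Hb expr2 mulr0.
  by move/dotv_eq0 => Eb; rewrite Hb mulr0 Eb dotv0r.
have nb : 0 < normv b by rewrite lt_neqAle eq_sym Hb hb.
have := dotv_amgm (normv b / normv a) a b.
rewrite -!normv_sq.
set s := normv b / normv a.
have hs : s * normv a = normv b by rewrite /s -mulrA mulVf ?mulr1 // gt_eqF.
have sp : 0 < s by rewrite /s divr_gt0.
have -> : s ^+ 2 * normv a ^+ 2 = normv b ^+ 2 by rewrite -exprMn hs.
move=> H.
have : s * dotv a b <= s * (normv a * normv b).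
  by rewrite mulrA hs; lra.
by rewrite ler_pM2l.
Qed.

Lemma dotv_le_norm m (a b : 'cV[R]_m) : `|dotv a b| <= normv a * normv b.
Proof.
rewrite ler_norml dotv_cs andbT.
have eN : normv (- a) = normv a by rewrite /normv dotvNl dotvNr opprK.
have := dotv_cs (- a) b. rewrite dotvNl eN.
lra.
Qed.

Lemma mx_bound m n (P : 'M[R]_(m, n)) : exists C, 0 <= C /\
  forall z : 'cV[R]_n, dotv (P *m z) (P *m z) <= C * dotv z z.
Proof.
exists (\sum_(i < m) dotv (row i P)^T (row i P)^T); split.
  by apply: sumr_ge0 => i _; exact: dotv_ge0.
move=> z; rewrite mulr_suml /dotv; apply: ler_sum => i _.
have -> : (P *m z) i 0 = dotv (row i P)^T z.
  by rewrite mxE /dotv; apply: eq_bigr => j _; rewrite !mxE.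
rewrite -expr2 -/(dotv _ _) -/(dotv z z).
have H := dotv_le_norm (row i P)^T z.
have : dotv (row i P)^T z ^+ 2 <= (normv (row i P)^T * normv z) ^+ 2.
  by rewrite -real_normK ?num_real // lerXn2r // ?nnegrE // ?normr_ge0 // mulr_ge0 // normv_ge0.
by rewrite exprMn !normv_sq.
Qed.

End Basics.


Section Rayleigh.
Variable R : realType.

Lemma le0_of_eps (x c : R) : 0 <= c -> (forall e, 0 < e -> x <= e * c) -> x <= 0.
Proof.
move=> c0 H; rewrite leNgt; apply/negP => x0.
have := H (x / (c + 1)) (divr_gt0 x0 (ltr_pwDr ltr01 c0)).
rewrite mulrAC ler_pdivlMr ?(ltr_pwDr ltr01 c0) //; nra.
Qed.

Lemma psd_cs m (N : 'M[R]_m) (x y : 'cV[R]_m) : N^T = N ->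
  (forall z, 0 <= dotv z (N *m z)) ->
  forall s, 2 * s * dotv x (N *m y) <= s ^+ 2 * dotv x (N *m x) + dotv y (N *m y).
Proof.
move=> NT psd s.
have := psd (s *: x - y).
rewrite !mulmxBr !dotvBl !dotvBr -!scalemxAr !dotvZl !dotvZr.
have -> : dotv y (N *m x) = dotv x (N *m y) by rewrite dotv_mulmx NT dotvC.
nra.
Qed.

Lemma rayleigh_min m (M : 'M[R]_m) (lam0 : R) : M^T = M -> eigenvalue M lam0 ->
  exists mu, eigenvalue M mu /\ forall d, mu * dotv d d <= dotv d (M *m d).
Proof.
move=> MT /eigenvalueP [v vM vnz].
pose d0 := v^T.
have Md0 : M *m d0 = lam0 *: d0.
  by rewrite /d0 -{1}MT -trmx_mul vM linearZ.
have dd0 : 0 < dotv d0 d0.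
  rewrite lt_neqAle dotv_ge0 andbT eq_sym; apply/negP => /eqP /dotv_eq0 H.
  by move: vnz; rewrite -(trmxK v) -/d0 H trmx0 eqxx.
pose S : set R := fun r => forall d : 'cV[R]_m, r * dotv d d <= dotv d (M *m d).
have [C [C0 HC]] := mx_bound M.
have S0 : S (- ((1 + C) / 2)).
  move=> d; have := dotv_amgm (-1) d (M *m d); have := HC d; have := dotv_ge0 d.
  move=> h1 h2 h3; nra.
have Sub : forall r, S r -> r <= lam0.
  move=> r /(_ d0); rewrite Md0 dotvZr => H.
  by rewrite -(ler_pM2r dd0).
have hs : has_sup S.
  split; first by exists (- ((1 + C) / 2)).
  by exists lam0 => r /Sub.
pose mu := sup S.
have Hmu : forall d, mu * dotv d d <= dotv d (M *m d).
  move=> d; rewrite -subr_le0; apply: (@le0_of_eps _ (dotv d d)); first exact: dotv_ge0.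
  move=> e e0; have [r Sr ltr] := sup_adherent e0 hs.
  move: ltr; have := Sr d; have := dotv_ge0 d; rewrite -/mu => h1 h2 h3; nra.
exists mu; split => //.
case E: (eigenvalue M mu) => //.
have : kermx (M - mu%:M) == 0 by move: E; rewrite /eigenvalue /eigenspace /= => /negbFE.
rewrite kermx_eq0 row_free_unit => Nu.
pose N := M - mu%:M.
have NT : N^T = N by rewrite /N linearB /= MT tr_scalar_mx.
have Nd : forall d, dotv d (N *m d) = dotv d (M *m d) - mu * dotv d d.
  by move=> d; rewrite /N mulmxBl mul_scalar_mx dotvBr dotvZr.
have psd : forall z, 0 <= dotv z (N *m z).
  by move=> z; rewrite Nd subr_ge0.
have [Ci [Ci0 HCi]] := mx_bound (invmx N).
have [CN [CN0 HCN]] := mx_bound N.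
pose K := (1 + CN) / 2.
have K0 : 0 < K by rewrite /K; lra.
have key : forall x, dotv x x <= Ci * K * dotv x (N *m x).
  move=> x.
  have h1 := HCi (N *m x); rewrite mulKmx // in h1.
  have h2 := psd_cs x (N *m x) NT psd K.
  have e : dotv x (N *m (N *m x)) = dotv (N *m x) (N *m x) by rewrite dotv_mulmx NT.
  rewrite e in h2.
  have h3 : dotv (N *m x) (N *m (N *m x)) <= K * dotv (N *m x) (N *m x).
    have := dotv_amgm 1 (N *m x) (N *m (N *m x)); have := HCN (N *m x).
    rewrite /K; lra.
  have h4 := psd x. have h5 := dotv_ge0 (N *m x).
  have h6 : dotv (N *m x) (N *m x) <= K * dotv x (N *m x) by nra.
  nra.
pose e := 1 / (Ci * K + 1).
have e0 : 0 < e by rewrite /e divr_gt0 //; nra.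
have Se : S (mu + e).
  move=> d; have := key d; have := psd d; rewrite Nd => h1 h2.
  have : e * dotv d d <= dotv d (M *m d) - mu * dotv d d.
    rewrite /e mul1r ler_pdivrMl; last by nra.
    nra.
  lra.
have := sup_upper_bound hs Se; rewrite -/mu; lra.
Qed.

Lemma rayleigh_max m (M : 'M[R]_m) (lam0 : R) : M^T = M -> eigenvalue M lam0 ->
  exists mu, eigenvalue M mu /\ forall d, dotv d (M *m d) <= mu * dotv d d.
Proof.
move=> MT /eigenvalueP [v vM vnz].
have : eigenvalue (- M) (- lam0).
  by apply/eigenvalueP; exists v => //; rewrite mulmxN vM scaleNr.
move/(rayleigh_min _) => /(_ _) []; first by rewrite linearN /= MT.
move=> mu [/eigenvalueP [w wM wnz] H]; exists (- mu); split.
  by apply/eigenvalueP; exists w => //; rewrite scaleNr -wM mulmxN opprK.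
by move=> d; have := H d; rewrite mulNmx dotvNr mulNr; lra.
Qed.

End Rayleigh.

Local Open Scope classical_set_scope.
Local Open Scope ring_scope.


Section Descent.
Variable R : realType.

Lemma descent m (F : 'cV[R]_m -> R) gF L : lipschitz_differentiable F gF L ->
  forall y d, F (y + d) <= F y + dotv (gF y) d + L / 2 * dotv d d.
Proof.
move=> [HG HL] y d.
pose psi (t : R) := F (y + t *: d) - F y - t * dotv (gF y) d - L / 2 * (t ^+ 2 * dotv d d).
pose dpsi (t : R) := dotv (gF (y + t *: d)) d - dotv (gF y) d - L * t * dotv d d.
have Hd : forall t, (fun h => h^-1 *: (psi (h + t) - psi t)) @ 0^' --> dpsi t.
  move=> t; apply/cvgrPdist_le => eps eps0.
  pose nd := normv d.
  have nd0 : 0 <= nd := normv_ge0 d.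
  have dd0 : 0 <= dotv d d := dotv_ge0 d.
  pose e := eps / (2 * (nd + 1)).
  have e0 : 0 < e by rewrite /e divr_gt0 //; lra.
  have [del [del0 Hdel]] := HG (y + t *: d) e e0.
  pose del' := Num.min (del / (nd + 1)) (eps / (2 * (`|L| * dotv d d + 1))).
  have del'0 : 0 < del'.
    have hL := normr_ge0 L.
    have h1 : 0 < 2 * (`|L| * dotv d d + 1) by nra.
    have h2 : 0 < nd + 1 by lra.
    by rewrite /del' lt_min !divr_gt0.
  near=> h.
  have hne : h != 0 by near: h; exact: nbhs_dnbhs_neq.
  have hlt : `|h| < del' by near: h; exact: dnbhs0_lt.
  have hpos : 0 < `|h| by rewrite normr_gt0.
  have hlt1 : `|h| < del / (nd + 1) by apply: (lt_le_trans hlt); rewrite /del' ge_min lexx.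
  have hlt2 : `|h| < eps / (2 * (`|L| * dotv d d + 1)).
    by apply: (lt_le_trans hlt); rewrite /del' ge_min lexx orbT.
  have nd1 : 0 < nd + 1 by lra.
  have hL := normr_ge0 L.
  have cL : 0 < 2 * (`|L| * dotv d d + 1) by nra.
  rewrite ltr_pdivlMr // in hlt1.
  rewrite ltr_pdivlMr // in hlt2.
  have nv : normv (h *: d) < del by rewrite normvZ -/nd; nra.
  have hG := Hdel _ nv.
  rewrite normvZ -/nd in hG.
  set G := F (y + t *: d + h *: d) - F (y + t *: d) - dotv (gF (y + t *: d)) (h *: d) in hG.
  have Ey : y + (h + t) *: d = (y + t *: d) + h *: d by rewrite scalerDl (addrC (h *: d)) addrA.
  have EG : psi (h + t) - psi t = G + h * dpsi t - L / 2 * (h ^+ 2 * dotv d d).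
    rewrite /psi /dpsi /G Ey dotvZr.
    move: (F (y + t *: d + h *: d)) (F (y + t *: d)) (F y) (dotv (gF y) d) (dotv (gF (y + t *: d)) d) (dotv d d) => a b c u w k.
    by field.
  change (`|dpsi t - h^-1 * (psi (h + t) - psi t)| <= eps).
  rewrite EG.
  have -> : dpsi t - h^-1 * (G + h * dpsi t - L / 2 * (h ^+ 2 * dotv d d))
      = L / 2 * h * dotv d d - G / h by field.
  apply: (le_trans (ler_normB _ _)).
  rewrite !normrM !normrV ?unitfE ?normr_eq0 // (ger0_norm dd0) normr_nat.
  have hG' : `|G| / `|h| <= e * nd by rewrite ler_pdivrMr //; nra.
  have he : e * nd <= eps / 2.
    rewrite /e mulrAC ler_pdivrMr; last by nra.
    nra.
  have hLL : `|L| * `|h| * dotv d d <= eps / 2 by nra.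
  rewrite -/(_ / _) in hG' *; lra.
have Hder : forall t, derivable psi t 1.
  move=> t; rewrite /derivable.
  have -> : (fun h : R => h^-1 *: ((psi \o shift t) (h *: 1) - psi t))
      = (fun h => h^-1 *: (psi (h + t) - psi t)).
    by apply: funext => h /=; rewrite [_ *: 1]mulr1.
  by apply/cvg_ex; exists (dpsi t); exact: Hd.
have Hval : forall t : R, derive1 psi t = dpsi t.
  by move=> t; rewrite /derive1; apply: cvg_lim => //; exact: Hd.
have Hneg : forall t, 0 <= t -> dpsi t <= 0.
  move=> t t0; rewrite /dpsi.
  have h1 := dotv_cs (gF (y + t *: d) - gF y) d.
  have h2 := HL (y + t *: d) y.
  rewrite -dotvBl.
  rewrite (_ : y + t *: d - y = t *: d) in h2; last by rewrite addrC addKr.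
  rewrite normvZ ger0_norm // in h2.
  have := normv_ge0 d; rewrite -normv_sq => h3.
  have h4 : normv (gF (y + t *: d) - gF y) * normv d <= L * (t * normv d) * normv d.
    by apply: ler_wpM2r.
  nra.
have Hc : {within `[0, 1], continuous psi}.
  by apply: derivable_within_continuous => t _; exact: Hder.
have Hn : forall t, t \in `]0, 1[%R -> derive1 psi t <= 0.
  move=> t; rewrite in_itv /= => /andP [t0 _]; rewrite Hval; apply: Hneg; exact: ltW.
have := @ler0_derive1_nincr R psi 0 1 (fun t _ => Hder t) Hn Hc 0 1 (lexx 0) ler01 (lexx 1).
rewrite /psi scale0r addr0 scale1r !mul1r expr1n expr0n /= !mul0r mulr0 !subr0 subrr.
lra.
Unshelve. all: by end_near.
Qed.

End Descent.

Local Close Scope classical_set_scope.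
Local Open Scope ring_scope.


Section Steps.
Variable R : realType.

Lemma dotv_sqD m (a e : 'cV[R]_m) : dotv (a + e) (a + e) = dotv a a + 2 * dotv a e + dotv e e.
Proof. rewrite !dotvDl !dotvDr (dotvC e a); ring. Qed.

Lemma xstep p q n (f g : 'cV[R]_p -> R) gradg Lg (A : 'M[R]_(n, p)) (B : 'M[R]_(n, q))
  (gam : 'cV[R]_n) (x0 x1 : 'cV[R]_p) (y0 : 'cV[R]_q) Lx beta LA :
  lipschitz_differentiable g gradg Lg ->
  (forall d, dotv (A *m d) (A *m d) <= LA * dotv d d) ->
  0 <= beta -> Lg + beta * LA <= Lx ->
  f x1 + dotv gam (A *m x1) + Lx / 2 * dotv (x1 - x0) (x1 - x0)
    + dotv (x1 - x0) (gradg x0 + beta *: (A^T *m (A *m x0 + B *m y0)))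
  <= f x0 + dotv gam (A *m x0) + Lx / 2 * dotv (x0 - x0) (x0 - x0)
    + dotv (x0 - x0) (gradg x0 + beta *: (A^T *m (A *m x0 + B *m y0))) ->
  g x1 + f x1 + dotv gam (A *m x1 + B *m y0)
    + beta / 2 * dotv (A *m x1 + B *m y0) (A *m x1 + B *m y0)
  <= g x0 + f x0 + dotv gam (A *m x0 + B *m y0)
    + beta / 2 * dotv (A *m x0 + B *m y0) (A *m x0 + B *m y0).
Proof.
move=> Hg HA b0 HLx.
have ex1 : x1 = x0 + (x1 - x0) by rewrite addrC subrK.
move: (x1 - x0) ex1 => dx ->.
have e1 : x0 + dx - x0 = dx by rewrite addrAC subrr add0r.
rewrite subrr !dotv0l mulr0 !addr0.
have Hd := descent Hg x0 dx.
set r0 := A *m x0 + B *m y0.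
have er : A *m (x0 + dx) + B *m y0 = r0 + A *m dx by rewrite mulmxDr /r0 addrAC.
rewrite er dotv_sqD dotvDr.
rewrite mulmxDr dotvDr dotvDr dotvZr.
have -> : dotv dx (A^T *m r0) = dotv (A *m dx) r0 by rewrite dotv_mulmx trmxK.
rewrite (dotvC dx (gradg x0)) (dotvC (A *m dx) r0).
have hA := ler_wpM2l b0 (HA dx).
have hdd := dotv_ge0 dx.
move=> H.
have : (Lg + beta * LA) * dotv dx dx <= Lx * dotv dx dx by apply: ler_wpM2r.
nra.
Qed.


Lemma ystep q n (h : 'cV[R]_q -> R) gradh Lh (B : 'M[R]_(n, q)) (gam c : 'cV[R]_n)
  (y0 y1 : 'cV[R]_q) Ly beta lam :
  lipschitz_differentiable h gradh Lh ->
  (forall d, lam * dotv d d <= dotv (B *m d) (B *m d)) ->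
  0 < beta -> 0 < Ly ->
  (forall y, dotv gam (B *m y1) + Ly / 2 * dotv (y1 - y0) (y1 - y0)
      + beta / 2 * dotv (c + B *m y1) (c + B *m y1) + dotv (y1 - y0) (gradh y0)
    <= dotv gam (B *m y) + Ly / 2 * dotv (y - y0) (y - y0)
      + beta / 2 * dotv (c + B *m y) (c + B *m y) + dotv (y - y0) (gradh y0)) ->
  B^T *m (gam + beta *: (c + B *m y1)) = - gradh y0 - Ly *: (y1 - y0)
  /\ h y1 + dotv gam (c + B *m y1) + beta / 2 * dotv (c + B *m y1) (c + B *m y1)
     <= h y0 + dotv gam (c + B *m y0) + beta / 2 * dotv (c + B *m y0) (c + B *m y0)
        - (Ly - Lh / 2 + beta * lam / 2) * dotv (y1 - y0) (y1 - y0).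
Proof.
move=> Hh HB b0 Ly0 Hy.
pose hb y := dotv gam (B *m y) + Ly / 2 * dotv (y - y0) (y - y0)
      + beta / 2 * dotv (c + B *m y) (c + B *m y) + dotv (y - y0) (gradh y0).
pose G := B^T *m gam + beta *: (B^T *m (c + B *m y1)) + Ly *: (y1 - y0) + gradh y0.
have Hexp : forall e, hb (y1 + e) - hb y1
    = dotv G e + (Ly / 2 * dotv e e + beta / 2 * dotv (B *m e) (B *m e)).
  move=> e; rewrite /hb /G.
  have e1 : y1 + e - y0 = (y1 - y0) + e by rewrite addrAC.
  have e2 : c + B *m (y1 + e) = (c + B *m y1) + B *m e by rewrite mulmxDr addrA.
  rewrite e1 e2 mulmxDr (dotv_sqD (y1 - y0) e) (dotv_sqD (c + B *m y1) (B *m e)).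
  rewrite (dotvDr (B *m y1) (B *m e) gam) (dotvDl (y1 - y0) e) !dotvDl !dotvZl.
  rewrite -(dotv_mulmx B gam e) -(dotv_mulmx B (c + B *m y1) e) (dotvC (gradh y0) e).
  rewrite !dotvDl !dotvDr !dotvNl !dotvNr. by field.
have Q0 : forall e, 0 <= Ly / 2 * dotv e e + beta / 2 * dotv (B *m e) (B *m e).
  move=> e; have := dotv_ge0 e; have := dotv_ge0 (B *m e); nra.
have G0 : G = 0.
  apply: dotv_eq0; apply/eqP; rewrite eq_le dotv_ge0 andbT.
  apply: (@le0_of_eps _ _ (Ly / 2 * dotv G G + beta / 2 * dotv (B *m G) (B *m G))) => //.
  move=> s s0.
  have := Hy (y1 + (- s) *: G); rewrite -/(hb _) -/(hb y1) -subr_ge0 Hexp.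
  rewrite -scalemxAr !dotvZl !dotvZr => H.
  have : 0 <= s * (- dotv G G + s * (Ly / 2 * dotv G G + beta / 2 * dotv (B *m G) (B *m G))).
    move: H; nra.
  rewrite pmulr_rge0 // => H2; lra.
split.
  rewrite mulmxDr -scalemxAr.
  have -> : B^T *m gam + beta *: (B^T *m (c + B *m y1)) = G - Ly *: (y1 - y0) - gradh y0.
    by rewrite /G (addrAC _ (gradh y0)) addrK addrK.
  by rewrite G0 sub0r addrC.
have Hd := descent Hh y0 (y1 - y0).
rewrite addrC subrK in Hd.
have H0 := Hexp (y0 - y1).
rewrite (addrC y1) subrK G0 dotv0l add0r in H0.
have Ey : dotv (y0 - y1) (y0 - y1) = dotv (y1 - y0) (y1 - y0).
  by rewrite -opprB dotvNl dotvNr opprK.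
rewrite Ey in H0.
have HBl := HB (y0 - y1); rewrite Ey in HBl.
have H2 := ler_wpM2l (ltW b0) HBl.
have hb0 : hb y0 = dotv gam (B *m y0) + beta / 2 * dotv (c + B *m y0) (c + B *m y0).
  by rewrite /hb subrr !dotv0l mulr0 !addr0.
rewrite hb0 /hb in H0.
rewrite (dotvDr c (B *m y1) gam) (dotvDr c (B *m y0) gam).
rewrite (dotvC (y1 - y0) (gradh y0)) in H0.
nra.
Qed.

End Steps.


Section Aux.
Variable R : realType.

Lemma eig_vec m (M : 'M[R]_m) a : eigenvalue M a -> exists d : 'cV[R]_m, 0 < dotv d d.
Proof.
move=> /eigenvalueP [v _ vnz]; exists v^T.
rewrite lt_neqAle dotv_ge0 andbT eq_sym; apply/negP => /eqP /dotv_eq0 H.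
by move: vnz; rewrite -(trmxK v) H trmx0 eqxx.
Qed.

Lemma lip_nonneg m (F : 'cV[R]_m -> R) gF L : lipschitz_differentiable F gF L ->
  (exists d : 'cV[R]_m, 0 < dotv d d) -> 0 <= L.
Proof.
move=> [_ HL] [d dd].
have := HL d 0; rewrite subr0.
have nd : 0 < normv d by rewrite /normv sqrtr_gt0.
have := normv_ge0 (gF d - gF 0).
move=> h1 h2; have : 0 <= L * normv d by apply: le_trans h2.
by rewrite pmulr_lge0.
Qed.

Lemma lip_sq m (F : 'cV[R]_m -> R) gF L : lipschitz_differentiable F gF L -> 0 <= L ->
  forall x y, dotv (gF x - gF y) (gF x - gF y) <= L ^+ 2 * dotv (x - y) (x - y).
Proof.
move=> [_ HL] L0 x y.
have h := HL x y.
rewrite -!normv_sq -exprMn expr2 [X in _ <= X]expr2.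
by apply: ler_pM => //; exact: normv_ge0.
Qed.

Lemma bound_shift (u : nat -> R) N : (exists M, forall k, u (k + N)%N <= M) ->
  exists M, forall k, u k <= M.
Proof.
move=> [M HM]; exists (`|M| + \sum_(i < N) `|u i|) => k.
have S0 : 0 <= \sum_(i < N) `|u i| by apply: sumr_ge0 => i _.
have hM := ler_norm M. have hM0 := normr_ge0 M.
case: (ltnP k N) => kN.
  have : `|u k| <= \sum_(i < N) `|u i|.
    by rewrite (bigD1 (Ordinal kN)) //= lerDl sumr_ge0.
  have := ler_norm (u k).
  lra.
have := HM (k - N)%N; rewrite subnK //; lra.
Qed.

End Aux.

Unset Implicit Arguments.
Theorem corollary1 (R : realType) (p q n : nat)
  (A : 'M[R]_(n, p)) (B : 'M[R]_(n, q))
  (f g : 'cV[R]_p -> R) (h : 'cV[R]_q -> R)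
  (gradg : 'cV[R]_p -> 'cV[R]_p) (gradh : 'cV[R]_q -> 'cV[R]_q)
  (Lg Lh LA lamB Lx Ly beta : R)
  (* (i), (ii) *)
  (Hh : lipschitz_differentiable h gradh Lh)
  (Hg : lipschitz_differentiable g gradg Lg)
  (* (iii) lower bounded and coercive in y on the feasible set *)
  (Hlb : exists m : R, forall x y, A *m x + B *m y = 0 -> m <= g x + f x + h y)
  (Hcoer : forall (xs : nat -> 'cV[R]_p) (ys : nat -> 'cV[R]_q),
      (forall k, A *m xs k + B *m ys k = 0) ->
      (forall M : R, exists N, forall k, (N <= k)%N -> M <= normv (ys k)) ->
      forall M : R, exists N, forall k, (N <= k)%N ->
        M <= g (xs k) + f (xs k) + h (ys k))
  (* (iv) *)
  (HBrank : \rank B = q)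
  (HIm : forall x : 'cV[R]_p, exists y : 'cV[R]_q, A *m x = B *m y)
  (* spectral constants *)
  (HLA : largest_eigenvalue (A^T *m A) LA)
  (HlamB : smallest_eigenvalue (B^T *m B) lamB)
  (* parameters *)
  (HLx0 : 0 < Lx) (HLy0 : 0 < Ly) (Hbeta0 : 0 < beta)
  (HLx : Lx >= Lg + beta * LA + 6 * (Lg + Lh) ^+ 2 + 1)
  (HLy : Ly >= (Lg + Lh) + (Lg + Lh) ^+ 2 + 3)
  (Hbeta1 : beta >= ((Lg + Lh) + Ly + 2) / lamB)
  (Hbeta2 : beta >= 3 * ((Lg + Lh) ^+ 2 + Ly ^+ 2)
                      / (lamB * ((Ly + (Lg + Lh) ^+ 2) / 2)))
  (Hbeta3 : beta >= 3 * Ly ^+ 2 / lamB)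
  (* the iterates of the two-block linearized ADMM (arbitrary initialization) *)
  (xs : nat -> 'cV[R]_p) (ys : nat -> 'cV[R]_q) (gam : nat -> 'cV[R]_n)
  (Hx : forall k (x : 'cV[R]_p),
      let fbar := fun x => f x + dotv (gam k) (A *m x)
        + Lx / 2 * dotv (x - xs k) (x - xs k)
        + dotv (x - xs k) (gradg (xs k) + beta *: (A^T *m (A *m xs k + B *m ys k))) in
      fbar (xs k.+1) <= fbar x)
  (Hy : forall k (y : 'cV[R]_q),
      let hbar := fun y => dotv (gam k) (B *m y)
        + Ly / 2 * dotv (y - ys k) (y - ys k)
        + beta / 2 * dotv (A *m xs k.+1 + B *m y) (A *m xs k.+1 + B *m y)
        + dotv (y - ys k) (gradh (ys k)) in
      hbar (ys k.+1) <= hbar y)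
  (Hgam : forall k, gam k.+1 = gam k + beta *: (A *m xs k.+1 + B *m ys k.+1)) :
  exists M : R, forall k, normv (gam k) <= M.
Proof.
have Lh0 : 0 <= Lh := lip_nonneg Hh (eig_vec HlamB.1).
have Lg0 : 0 <= Lg := lip_nonneg Hg (eig_vec HLA.1).
have HAb : forall d, dotv (A *m d) (A *m d) <= LA * dotv d d.
  have sym : (A^T *m A)^T = A^T *m A by rewrite trmx_mul trmxK.
  have [mu [emu Hmu]] := rayleigh_max sym HLA.1.
  have muL := HLA.2 mu emu.
  move=> d; have := Hmu d; rewrite -mulmxA dotv_mulmx trmxK => hh.
  apply: (le_trans hh); apply: ler_wpM2r => //; exact: dotv_ge0.
have HBb : forall d, lamB * dotv d d <= dotv (B *m d) (B *m d).
  have sym : (B^T *m B)^T = B^T *m B by rewrite trmx_mul trmxK.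
  have [mu [emu Hmu]] := rayleigh_min sym HlamB.1.
  have muL := HlamB.2 mu emu.
  move=> d; have := Hmu d; rewrite -mulmxA dotv_mulmx trmxK => hh.
  apply: le_trans hh; apply: ler_wpM2r => //; exact: dotv_ge0.
have lam0 : 0 < lamB.
  have /eigenvalueP [v vM vnz] := HlamB.1.
  pose d0 := v^T.
  have dd0 : 0 < dotv d0 d0.
    rewrite lt_neqAle dotv_ge0 andbT eq_sym; apply/negP => /eqP /dotv_eq0 H.
    by move: vnz; rewrite -(trmxK v) -/d0 H trmx0 eqxx.
  have rf : row_free B^T by rewrite /row_free mxrank_tr HBrank.
  have Bd0 : 0 < dotv (B *m d0) (B *m d0).
    rewrite lt_neqAle dotv_ge0 andbT eq_sym; apply/negP => /eqP /dotv_eq0 H.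
    have : v *m B^T = 0 *m B^T by rewrite mul0mx -(trmxK v) -trmx_mul -/d0 H trmx0.
    by move/(row_free_inj rf) => v0; rewrite v0 eqxx in vnz.
  have e : dotv (B *m d0) (B *m d0) = lamB * dotv d0 d0.
    rewrite dotv_mulmx dotvC mulmxA.
    have -> : (B^T *m B) *m d0 = lamB *: d0.
      have sym : (B^T *m B)^T = B^T *m B by rewrite trmx_mul trmxK.
      by rewrite /d0 -{1}sym -trmx_mul vM linearZ.
    by rewrite dotvZr.
  by move: Bd0; rewrite e pmulr_lgt0.
have HR3 : forall z, lamB * dotv (B *m z) (B *m z) <= dotv (B^T *m (B *m z)) (B^T *m (B *m z)).
  move=> z.
  have e1 : dotv (B *m z) (B *m z) = dotv z (B^T *m (B *m z)) by rewrite dotv_mulmx dotvC.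
  have h1 := dotv_amgm lamB z (B^T *m (B *m z)).
  have h2 := HBb z. rewrite -e1 in h1.
  have h3 := dotv_ge0 (B *m z).
  have h4 : lamB * (lamB * dotv z z) <= lamB * dotv (B *m z) (B *m z) by apply: ler_wpM2l; [exact: ltW|].
  nra.
set w := Lg + Lh in HLx HLy Hbeta1 Hbeta2.
set t := beta * lamB.
have t1 : 3 * Ly ^+ 2 <= t by rewrite /t -ler_pdivrMr.
have t2 : w + Ly + 2 <= t by rewrite /t -ler_pdivrMr.
have Ly3 : 3 <= Ly by have := sqr_ge0 w; rewrite /w in HLy *; lra.
have LhLy : Lh <= Ly by have := sqr_ge0 w; rewrite /w in HLy *; lra.
have Lxb : Lg + beta * LA <= Lx by have := sqr_ge0 w; rewrite /w in HLx *; nra.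
have [zf Hzf] := choice HIm.
pose r k := A *m xs k + B *m ys k.
pose u k := zf (xs k) + ys k.
have Hu : forall k, r k = B *m u k by move=> k; rewrite /r /u mulmxDr Hzf.
pose D k := dotv (ys k.+1 - ys k) (ys k.+1 - ys k).
have D0 : forall k, 0 <= D k by move=> k; exact: dotv_ge0.
have b0 : 0 <= beta by exact: ltW.
have HY : forall k, B^T *m gam k.+1 = - gradh (ys k) - Ly *: (ys k.+1 - ys k)
   /\ h (ys k.+1) + dotv (gam k) (r k.+1) + beta / 2 * dotv (r k.+1) (r k.+1)
     <= h (ys k) + dotv (gam k) (A *m xs k.+1 + B *m ys k)
        + beta / 2 * dotv (A *m xs k.+1 + B *m ys k) (A *m xs k.+1 + B *m ys k)
        - (Ly - Lh / 2 + t / 2) * D k.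
  move=> k.
  have := @ystep _ q n h gradh Lh B (gam k) (A *m xs k.+1) (ys k) (ys k.+1) Ly beta lamB
     Hh HBb Hbeta0 HLy0 (fun y => Hy k y).
  by rewrite -Hgam.
have FOC : forall k, B^T *m gam k.+1 = - gradh (ys k) - Ly *: (ys k.+1 - ys k).
  by move=> k; case: (HY k).
pose Lag k := g (xs k) + f (xs k) + h (ys k) + dotv (gam k) (r k) + beta / 2 * dotv (r k) (r k).
have Hstep : forall k, Lag k.+1 <= Lag k - (Ly - Lh / 2 + t / 2) * D k + beta * dotv (r k.+1) (r k.+1).
  move=> k.
  have hx := @xstep _ p q n f g gradg Lg A B (gam k) (xs k) (xs k.+1) (ys k) Lx beta LA
     Hg HAb b0 Lxb (Hx k (xs k)).
  have [_ hy] := HY k.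
  have eg : dotv (gam k.+1) (r k.+1) = dotv (gam k) (r k.+1) + beta * dotv (r k.+1) (r k.+1).
    by rewrite Hgam dotvDl dotvZl.
  rewrite /Lag eg -/(r k); move: hx hy; rewrite -/(r k); lra.
have t0 : 0 < t by rewrite /t mulr_gt0.
have Lhsq : Lh ^+ 2 <= Ly ^+ 2 by rewrite ler_pXn2r // ?nnegrE //; lra.
have Hdual : forall k, beta * dotv (r k.+2) (r k.+2) <= D k.+1 + 2 * D k.
  move=> k.
  have eg : gam k.+2 - gam k.+1 = B *m (beta *: u k.+2).
    by rewrite (Hgam k.+1) addrAC subrr add0r -/(r k.+2) Hu scalemxAr.
  have h1 := HR3 (beta *: u k.+2).
  rewrite -eg mulmxBr !FOC in h1.
  have ev : forall (a b c d : 'cV[R]_q), (- a - b) - (- c - d) = - (a - c) + - b + d.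
    by move=> a b c d; apply/matrixP => i j; rewrite !mxE; ring.
  rewrite ev in h1.
  have h2 := dotv_sq_add3 (- (gradh (ys k.+1) - gradh (ys k))) (- (Ly *: (ys k.+2 - ys k.+1))) (Ly *: (ys k.+1 - ys k)).
  rewrite !dotvNl !dotvNr !opprK !dotvZl !dotvZr -/(D k) -/(D k.+1) in h2.
  have h3 := lip_sq Hh Lh0 (ys k.+1) (ys k); rewrite -/(D k) in h3.
  have eg2 : gam k.+2 - gam k.+1 = beta *: r k.+2 by rewrite (Hgam k.+1) addrAC subrr add0r.
  rewrite eg2 !dotvZl !dotvZr in h1.
  have h4 := D0 k. have h5 := D0 k.+1. have h6 := dotv_ge0 (r k.+2).
  have h7 : lamB * (beta * (beta * dotv (r k.+2) (r k.+2))) = t * (beta * dotv (r k.+2) (r k.+2)).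
    by rewrite /t; ring.
  rewrite h7 in h1.
  have h8 : t * (beta * dotv (r k.+2) (r k.+2)) <= t * (D k.+1 + 2 * D k) by nra.
  by rewrite ler_pM2l in h8.
pose Phi k := Lag k.+1 + 2 * D k.
have HPhi : forall k, Phi k.+1 <= Phi k.
  move=> k; rewrite /Phi.
  have h1 := Hstep k.+1. have h2 := Hdual k. have h3 := D0 k.+1.
  have c3 : 3 <= Ly - Lh / 2 + t / 2 by nra.
  nra.
have HPhi0 : forall k, Phi k <= Phi 0%N.
  elim=> [|k IH]; first exact: lexx.
  exact: le_trans (HPhi k) IH.
have Ly2Lh : Lh <= Ly ^+ 2 by nra.
have HLow : forall k, g (xs k.+1) + f (xs k.+1) + h (- zf (xs k.+1)) + D k <= Phi k.
  move=> k.
  set X := xs k.+1. set Y := ys k.+1. set U := u k.+1.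
  have eY : Y + - U = - zf X.
    by rewrite /U /u -/X -/Y; apply/matrixP => i j; rewrite !mxE; ring.
  have hd := descent Hh Y (- U).
  rewrite eY dotvNr dotvNl dotvNr opprK in hd.
  pose V := gradh Y - gradh (ys k) - Ly *: (ys k.+1 - ys k).
  have hV : dotv V V <= 4 * Ly ^+ 2 * D k.
    have := dotv_sq_add (gradh Y - gradh (ys k)) (- (Ly *: (ys k.+1 - ys k))).
    rewrite dotvNl dotvNr opprK !dotvZl !dotvZr -/(D k) -/V.
    have := lip_sq Hh Lh0 Y (ys k); rewrite -/(D k) /Y.
    have := D0 k. nra.
  have hA := dotv_amgm (2 * Ly ^+ 2) U (- V).
  rewrite (dotvC U (- V)) in hA.
  have kV : dotv (- V) U <= Ly ^+ 2 * dotv U U + D k.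
    have Lyp : 0 < 4 * Ly ^+ 2 by nra.
    rewrite -(ler_pM2l Lyp). move: hA hV; rewrite (dotvNl V (- V)) (dotvNr V V) opprK; lra.
  have hB := HBb U.
  have hB2 := ler_wpM2l b0 hB.
  have hU := dotv_ge0 U.
  have eL : dotv (gam k.+1) (r k.+1) = - dotv (gradh (ys k)) U - Ly * dotv (ys k.+1 - ys k) U.
    by rewrite Hu dotv_mulmx FOC (dotvBl (- gradh (ys k))) dotvNl dotvZl.
  have eV : dotv (- V) U = - dotv (gradh Y) U + dotv (gradh (ys k)) U + Ly * dotv (ys k.+1 - ys k) U.
    rewrite /V dotvNl (dotvBl (gradh Y - gradh (ys k))) (dotvBl (gradh Y)) dotvZl; ring.
  rewrite /Phi /Lag eL (Hu k.+1) -/X -/Y.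
  rewrite eV in kV.
  have ht : t * dotv U U <= beta * dotv (B *m U) (B *m U) by rewrite /t -mulrA.
  have tL : 2 * Ly ^+ 2 + Lh <= t by nra.
  have := D0 k.
  nra.
have [lb Hlb'] := Hlb.
have Feas : forall k, lb <= g (xs k) + f (xs k) + h (- zf (xs k)).
  by move=> k; apply: Hlb'; rewrite mulmxN Hzf subrr.
set P0 := Phi 0%N.
have HDb : forall k, D k <= P0 - lb.
  by move=> k; have := HLow k; have := HPhi0 k; have := Feas k.+1; rewrite -/P0; lra.
have HFb : forall k, g (xs k.+1) + f (xs k.+1) + h (- zf (xs k.+1)) <= P0.
  by move=> k; have := HLow k; have := HPhi0 k; have := D0 k; rewrite -/P0; lra.
pose Cu := 3 * (P0 - lb) / t.
have Hub : forall k, dotv (u k.+2) (u k.+2) <= Cu.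
  move=> k; rewrite /Cu ler_pdivlMr //.
  have h1 := HBb (u k.+2). rewrite -Hu in h1.
  have h2 := Hdual k. have h3 := HDb k. have h4 := HDb k.+1.
  have h5 := ler_wpM2l b0 h1.
  have : t * dotv (u k.+2) (u k.+2) = beta * (lamB * dotv (u k.+2) (u k.+2)) by rewrite /t mulrA.
  lra.
have Hcb : exists M1, forall k, normv (- zf (xs k.+1)) <= M1.
  apply: contrapT => Hn.
  have Hj : forall j : nat, exists k, j%:R < normv (- zf (xs k.+1)).
    move=> j; apply: contrapT => Hk; apply: Hn; exists j%:R => k.
    rewrite leNgt; apply/negP => Hlt; apply: Hk; exists k; exact: Hlt.
  have [nf Hnf] := choice Hj.
  have Hf : forall j, A *m xs (nf j).+1 + B *m (- zf (xs (nf j).+1)) = 0.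
    by move=> j; rewrite mulmxN Hzf subrr.
  have Hd : forall M : R, exists N, forall k, (N <= k)%N -> M <= normv (- zf (xs (nf k).+1)).
    move=> M; exists (Num.Def.archi_bound `|M|) => k Nk.
    have h1 := archi_boundP (normr_ge0 M).
    have h2 : (Num.Def.archi_bound `|M|)%:R <= k%:R :> R by rewrite ler_nat.
    have h3 := Hnf k. have h4 := ler_norm M.
    lra.
  have [N HN] := Hcoer (fun j => xs (nf j).+1) (fun j => - zf (xs (nf j).+1)) Hf Hd (P0 + 1).
  have := HN N (leqnn N); have := HFb (nf N); simpl; lra.
have [M1 HM1] := Hcb.
pose Cy := 2 * Cu + 2 * M1 ^+ 2.
have Hyb : forall k, dotv (ys k.+2) (ys k.+2) <= Cy.
  move=> k.
  have ey : ys k.+2 = u k.+2 + - zf (xs k.+2) by rewrite /u; apply/matrixP => i j; rewrite !mxE; ring.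
  rewrite ey.
  have h1 := dotv_sq_add (u k.+2) (- zf (xs k.+2)).
  have h2 := Hub k.
  have h3 : dotv (- zf (xs k.+2)) (- zf (xs k.+2)) <= M1 ^+ 2.
    rewrite -normv_sq expr2 [X in _ <= X]expr2; apply: ler_pM; try exact: normv_ge0; exact: HM1.
  rewrite /Cy; lra.
pose gh0 := gradh 0.
pose Cgh := 2 * Lh ^+ 2 * Cy + 2 * dotv gh0 gh0.
have Hghb : forall k, dotv (gradh (ys k.+2)) (gradh (ys k.+2)) <= Cgh.
  move=> k.
  have eg : gradh (ys k.+2) = (gradh (ys k.+2) - gradh 0) + gh0 by rewrite subrK.
  rewrite eg.
  have h1 := dotv_sq_add (gradh (ys k.+2) - gradh 0) gh0.
  have h2 := lip_sq Hh Lh0 (ys k.+2) 0. rewrite subr0 in h2.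
  have h3 := Hyb k.
  have h4 : Lh ^+ 2 * dotv (ys k.+2) (ys k.+2) <= Lh ^+ 2 * Cy by apply: ler_wpM2l => //; exact: sqr_ge0.
  rewrite /Cgh; lra.
pose Cg := 2 * Cgh + 2 * Ly ^+ 2 * (P0 - lb).
have HBgb : forall k, dotv (B^T *m gam k.+3) (B^T *m gam k.+3) <= Cg.
  move=> k; rewrite FOC.
  have h1 := dotv_sq_add (- gradh (ys k.+2)) (- (Ly *: (ys k.+3 - ys k.+2))).
  rewrite !dotvNl !dotvNr !opprK !dotvZl !dotvZr -/(D k.+2) in h1.
  have h2 := Hghb k. have h3 := HDb k.+2.
  have h4 : Ly ^+ 2 * D k.+2 <= Ly ^+ 2 * (P0 - lb) by apply: ler_wpM2l => //; exact: sqr_ge0.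
  rewrite /Cg; move: h1; rewrite expr2; rewrite expr2 in h4; lra.
have HG : forall k, exists U, gam k - gam 0%N = B *m U.
  elim=> [|k [U HU]]; first by exists 0; rewrite subrr mulmx0.
  exists (U + beta *: u k.+1).
  rewrite mulmxDr -HU -scalemxAr -Hu Hgam.
  by apply/matrixP => i j; rewrite !mxE; ring.
pose Cgam := 2 * dotv (gam 0%N) (gam 0%N)
  + 2 * ((2 * Cg + 2 * dotv (B^T *m gam 0%N) (B^T *m gam 0%N)) / lamB).
have Hgb : forall k, dotv (gam (k + 3)%N) (gam (k + 3)%N) <= Cgam.
  move=> k; rewrite addn3.
  have [U HU] := HG k.+3.
  have eg : gam k.+3 = gam 0%N + (gam k.+3 - gam 0%N) by rewrite addrC subrK.
  rewrite eg.
  have h1 := dotv_sq_add (gam 0%N) (gam k.+3 - gam 0%N).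
  have h2 := HR3 U.
  rewrite -HU mulmxBr in h2.
  have h3 := dotv_sq_add (B^T *m gam k.+3) (- (B^T *m gam 0%N)).
  rewrite dotvNl dotvNr opprK in h3.
  have h4 := HBgb k.
  have h5 : dotv (gam k.+3 - gam 0%N) (gam k.+3 - gam 0%N)
      <= (2 * Cg + 2 * dotv (B^T *m gam 0%N) (B^T *m gam 0%N)) / lamB.
    rewrite ler_pdivlMr //; lra.
  rewrite /Cgam; lra.
have [Mg HMg] := @bound_shift R (fun k => dotv (gam k) (gam k)) 3 (ex_intro _ Cgam Hgb).
exists (Num.sqrt Mg) => k.
by rewrite /normv; apply: ler_wsqrtr; exact: HMg.
Qed.
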